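(* Given $\lambda\in(0,1-q^{-1})$, $m=cm'\geq cm''s$ with $c,m',m'',s\in\mathbb{N}$ and $c>1/(1-H_q(\lambda))$, it is possible to exactly recover any $\mathbf x\in\mathcal{S}_q$ from $\mathbf y=\mathbf A\mathbf x+\mathbf n$ with probability at least $1-P_e$ if $\mathbf A=\mathbf G\mathbf A'$, where $\mathbf G$ is the generator matrix of an $[m,m',d]_q$ linear code achieving probability of error at most $P_e$ over the $q$-ary symmetric channel with crossover probability $\lambda$, and some set of $m''s$ rows of $\mathbf A'$ forms a matrix $\mathbf A''$ such that $\phi_s(\mathbf A'')$ is the parity check matrix of an $[n,n-m'',d']_{q^s}$ linear code with $d'>2b$.
   Context: Let $q$ be a prime or prime power, $\mathbb F_q$ the finite field with $q$ elements, and $b<n$ positive integers. $\mathcal S_q$ denotes the set of vectors $\mathbf x\in\mathbb F_q^n$ with at most $b$ nonzero entries (the finite alphabet of size $q$, containing $0$, is identified with $\mathbb F_q$ via a bijection sending $0$ to the zero of $\mathbb F_q$). Measurements are $\mathbf y=\mathbf A\mathbf x+\mathbf n$ with sensing matrix $\mathbf A\in\mathbb F_q^{m\times n}$, where the noise $\mathbf n\in\mathbb F_q^m$ is generated by $m$ independent uses of a $q$-ary symmetric channel with crossover probability $\lambda$: each entry equals $0$ with probability $1-\lambda$ and each nonzero $a\in\mathbb F_q$ with probability $\lambda/(q-1)$. An $[N,K,D]_q$ code is a linear code over $\mathbb F_q$ of length $N$, with $q^K$ codewords and minimum Hamming distance $D$. A linear code achieves probability of error at most $P_e$ over a channel if,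 for every codeword, the probability that a nearest-neighbor-codeword decoder decodes it erroneously (given it was sent) is at most $P_e$. $H_q(x)=-x\log_q x-(1-x)\log_q(1-x)+x\log_q(q-1)$ for $x\in(0,1)$. Field lifting: fix a primitive polynomial of degree $s$ over $\mathbb F_q$ with root $\alpha$, a primitive element of $\mathbb F_{q^s}$; for a matrix $\mathbf C=[c_{ij}]\in\mathbb F_q^{Ms\times n}$, $\phi_s(\mathbf C)=[c'_{kl}]\in\mathbb F_{q^s}^{M\times n}$ with $c'_{kl}=\sum_{t=0}^{s-1}c_{(k-1)s+t+1,l}\,\alpha^t$ (the $k$-th row combines the $s$ consecutive rows of block $k$ with weights $1,\alpha,\ldots,\alpha^{s-1}$). *)

(* Defs.v *)
From HB Require Import structures.
From mathcomp Require Import all_boot all_order all_algebra all_field.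
From mathcomp Require Import reals exp.
Set Implicit Arguments. Unset Strict Implicit. Unset Printing Implicit Defensive.
Import Order.TTheory GRing.Theory Num.Theory.
Local Open Scope ring_scope.

Definition hdist (K : finFieldType) (N : nat) (u v : 'cV[K]_N) : nat :=
  #|[set i | u i 0 != v i 0]|.
Definition wt (K : finFieldType) (N : nat) (u : 'cV[K]_N) : nat :=
  #|[set i | u i 0 != 0]|.

Definition is_min_dist (K : finFieldType) (N : nat) (C : {set 'cV[K]_N}) (d : nat) :=
  (forall c1 c2, c1 \in C -> c2 \in C -> c1 != c2 -> (d <= hdist c1 c2)%N) /\
  exists c1 c2, [/\ c1 \in C, c2 \in C, c1 != c2 & hdist c1 c2 = d].

(* C (of length N) is an [N, k, d]_{|K|} code: |K|^k codewords, min distance d *)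
Definition code_params (K : finFieldType) (N : nat) (C : {set 'cV[K]_N}) (k d : nat) :=
  #|C| = (#|K| ^ k)%N /\ is_min_dist C d.

Definition gen_code (K : finFieldType) (N k : nat) (G : 'M[K]_(N, k)) : {set 'cV[K]_N} :=
  [set G *m u | u : 'cV[K]_k].

Definition pc_code (K : finFieldType) (r N : nat) (H : 'M[K]_(r, N)) : {set 'cV[K]_N} :=
  [set v : 'cV[K]_N | H *m v == 0].

Definition qsc_prob (R : realType) (F : finFieldType) (M : nat) (lam : R)
  (e : 'cV[F]_M) : R :=
  \prod_(i < M) (if e i 0 == 0 then 1 - lam else lam / (#|F|.-1)%:R).
Definition qsc_P (R : realType) (F : finFieldType) (M : nat) (lam : R)
  (E : pred 'cV[F]_M) : R :=
  \sum_(e : 'cV[F]_M | E e) qsc_prob lam e.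

Definition nn_decoder (K : finFieldType) (N : nat) (C : {set 'cV[K]_N})
  (D : 'cV[K]_N -> 'cV[K]_N) :=
  forall y, D y \in C /\ forall c, c \in C -> (hdist y (D y) <= hdist y c)%N.

Definition achieves_Pe (R : realType) (F : finFieldType) (M : nat) (lam Pe : R)
  (C : {set 'cV[F]_M}) :=
  exists D, nn_decoder C D /\
    forall c, c \in C -> qsc_P lam (fun e => D (c + e) != c) <= Pe.

Definition Hq (R : realType) (q : nat) (x : R) : R :=
  - x * ln x / ln q%:R - (1 - x) * ln (1 - x) / ln q%:R
  + x * ln (q.-1)%:R / ln q%:R.

Lemma lift_idx_lt (M s : nat) (k : 'I_M) (t : 'I_s) : (k * s + t < M * s)%N.
Proof.
have ht := ltn_ord t; have hk := ltn_ord k.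
apply: (@leq_trans (k * s + s)%N); first by rewrite ltn_add2l.
by rewrite -mulSnr leq_mul2r hk orbT.
Qed.

Definition phi_s (F L : fieldType) (iota : {rmorphism F -> L}) (alpha : L)
  (M s n : nat) (C : 'M[F]_(M * s, n)) : 'M[L]_(M, n) :=
  \matrix_(k < M, l < n)
     \sum_(t < s) iota (C (Ordinal (lift_idx_lt k t)) l) * alpha ^+ t.

Definition primitive_poly_root (F L : finFieldType) (iota : {rmorphism F -> L})
  (p : {poly F}) (alpha : L) (s : nat) :=
  [/\ size p = s.+1, p \is monic, irreducible_poly p,
      root (map_poly iota p) alpha & (#|L|.-1).-primitive_root alpha].

(* Main.v *)
Require Import Defs.
From HB Require Import structures.
From mathcomp Require Import all_boot all_order all_algebra all_field.
From mathcomp Require Import reals exp.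
Import Order.TTheory GRing.Theory Num.Theory.
Local Open Scope ring_scope.

Lemma phi_s_mul0 (F L : fieldType) (iota : {rmorphism F -> L}) (alpha : L)
  (M s n : nat) (C : 'M[F]_(M * s, n)) (v : 'cV[F]_n) :
  C *m v = 0 -> phi_s iota alpha C *m map_mx iota v = 0.
Proof.
move=> h; apply/matrixP => k j; rewrite !mxE.
under eq_bigr => l _ do rewrite !mxE big_distrl /=.
rewrite exchange_big /= big1 // => t _.
have := congr1 (fun A : 'M_(_, _) => A (Ordinal (lift_idx_lt k t)) 0) h.
rewrite !mxE => h2.
transitivity (iota (\sum_l C (Ordinal (lift_idx_lt k t)) l * v l 0) * alpha ^+ t).
  rewrite rmorph_sum big_distrl /=; apply: eq_bigr => l _.

  by rewrite rmorphM /= mulrAC (ord1 j).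
by rewrite h2 rmorph0 mul0r.
Qed.

Lemma rowsub_mul (F : fieldType) (k m n : nat) (f : 'I_k -> 'I_m) (A : 'M[F]_(m, n)) (x : 'cV[F]_n) :
  rowsub f A *m x = rowsub f (A *m x).
Proof. by apply/matrixP => i j; rewrite !mxE; apply: eq_bigr => l _; rewrite mxE. Qed.

Lemma gen_inj (F : finFieldType) (m k d : nat) (G : 'M[F]_(m, k)) :
  code_params (gen_code G) k d -> injective (fun u : 'cV[F]_k => G *m u).
Proof.
case=> hc _ u v; move: hc; rewrite /gen_code.
have e := card_mx F k 1; rewrite muln1 in e; rewrite -e => /eqP /imset_injP H.
by move=> huv; apply: H => //; rewrite inE.
Qed.
Lemma qsc_total (R : realType) (F : finFieldType) (M : nat) (lam : R) :
  qsc_P lam (fun _ : 'cV[F]_M => true) = 1.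
Proof. Set Printing Coercions.
rewrite /qsc_P /qsc_prob.
have -> : \sum_(e : 'cV[F]_M | true)
    \prod_(i < M) (if e i 0 == 0 then 1 - lam else lam / (#|F|.-1)%:R)
  = \sum_(g : {ffun 'I_M -> F})
    \prod_(i < M) (if g i == 0 then 1 - lam else lam / (#|F|.-1)%:R).
  rewrite (reindex (fun g : {ffun 'I_M -> F} => \col_i g i)) /=.
    by apply: eq_bigr => g _; apply: eq_bigr => i _; rewrite mxE.
  exists (fun e : 'cV[F]_M => [ffun i => e i 0]) => [g _|e _].
    by apply/ffunP => i; rewrite ffunE mxE.
  by apply/matrixP => i j; rewrite mxE ffunE ord1.
rewrite -(bigA_distr_bigA (fun (i : 'I_M) (a : F) =>
   if a == 0 then 1 - lam else lam / (#|F|.-1)%:R)) /=.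
rewrite big1 // => i _.
rewrite (bigD1 0) //= eqxx.
rewrite (eq_bigr (fun _ => lam / (#|F|.-1)%:R)); last by move=> a /negbTE ->.
rewrite sumr_const cardC1.
have hF : (1 < #|F|)%N by apply: finNzRing_gt1.
have gen : forall k : nat, (0 < k)%N -> 1 - lam + lam / k%:R *+ k = 1.
  move=> k hk; rewrite -mulr_natr -mulrA mulVf ?mulr1 ?subrK //.
  by rewrite pnatr_eq0 -lt0n.
apply: gen; by rewrite -ltnS prednK // ltnW.
Qed.

Lemma uniq_dec (F L : finFieldType) (iota : {rmorphism F -> L}) (alpha : L)
  (M s n k d' b : nat) (C : 'M[F]_(M * s, n)) (x x' : 'cV[F]_n) :
  code_params (pc_code (phi_s iota alpha C)) k d' -> (2 * b < d')%N ->
  (wt x <= b)%N -> (wt x' <= b)%N -> C *m x = C *m x' -> x = x'.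
Proof.
move=> hpc hd hx hx' h.
apply/eqP; apply/negPn/negP => hne.
set v := map_mx iota (x - x').
have hv : v \in pc_code (phi_s iota alpha C).
  by rewrite inE; apply/eqP; apply: phi_s_mul0; rewrite mulmxBr h subrr.
have h0 : (0 : 'cV[L]_n) \in pc_code (phi_s iota alpha C) by rewrite inE mulmx0.
have vne : v != 0.
  apply/negP => /eqP hv0; apply: (negP hne); rewrite -subr_eq0; apply/eqP/matrixP => i j.
  have := congr1 (fun A : 'cV[L]_n => A i j) hv0; rewrite /v !mxE => /eqP.
  by rewrite fmorph_eq0 => /eqP ->.
case: hpc => _ [hmin _]; have := hmin v 0 hv h0 vne.
have hsub : [set i | v i 0 != (0 : 'cV[L]_n) i 0] \subset
   [set i | x i 0 != 0] :|: [set i | x' i 0 != 0].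
  apply/subsetP => i; rewrite !inE /v !mxE.
  case: (x i 0 =P 0) => [->|//]; case: (x' i 0 =P 0) => [->|//].
  by rewrite subrr rmorph0 eqxx.
move=> hle.
have := leq_trans hle (subset_leq_card hsub).
rewrite cardsU => h2.
have h3 := leq_trans h2 (leq_subr _ _).
have : (d' <= b + b)%N by apply: (leq_trans h3); rewrite leq_add.
by rewrite addnn -mul2n leqNgt hd.
Qed.

Theorem theorem2 (R : realType) (F L : finFieldType) (iota : {rmorphism F -> L})
  (p : {poly F}) (alpha : L) (n b m c m' m'' s d d' : nat) (lam Pe : R)
  (G : 'M[F]_(m, m')) (A' : 'M[F]_(m', n)) (f : 'I_(m'' * s) -> 'I_m') :
  (0 < b)%N -> (b < n)%N ->
  #|L| = (#|F| ^ s)%N -> primitive_poly_root iota p alpha s ->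
  0 < lam -> lam < 1 - (#|F|%:R)^-1 ->
  m = (c * m')%N -> (c * (m'' * s) <= m)%N ->
  (1 - Hq #|F| lam)^-1 < c%:R ->
  code_params (gen_code G) m' d -> achieves_Pe lam Pe (gen_code G) ->
  injective f ->
  code_params (pc_code (phi_s iota alpha (rowsub f A'))) (n - m'') d' ->
  (2 * b < d')%N ->
  exists dec : 'cV[F]_m -> 'cV[F]_n,
    forall x : 'cV[F]_n, (wt x <= b)%N ->
      1 - Pe <= qsc_P lam (fun e => dec ((G *m A') *m x + e) == x).
Proof.
move=> _ _ _ _ hl0 hl1 _ _ _ hG [D [hD hPe]] _ hpc hd.
have Ginj := @gen_inj F _ _ _ G hG.
have uq : forall x x' : 'cV[F]_n, (wt x <= b)%N -> (wt x' <= b)%N ->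
    (G *m A') *m x = (G *m A') *m x' -> x = x'.
  move=> x x' hx hx'; rewrite -!mulmxA => /Ginj h.
  apply: (@uniq_dec F L iota alpha _ _ _ _ _ b _ _ _ hpc hd hx hx').
  by rewrite !rowsub_mul h.
exists (fun y => if [pick x | (wt x <= b)%N && ((G *m A') *m x == D y)] is Some x
   then x else 0) => x hx.
set c0 := (G *m A') *m x.
have hc0 : c0 \in gen_code G by rewrite /c0 -mulmxA; apply/imsetP; exists (A' *m x).
have hlam1 : lam <= 1.
  apply: (le_trans (ltW hl1)); rewrite lerBlDr lerDl invr_ge0 ler0n //.
have hw : forall e : 'cV[F]_m, 0 <= qsc_prob lam e.
  move=> e; apply: prodr_ge0 => i _; case: ifP => _; first by rewrite subr_ge0.
  by apply: divr_ge0; [apply: ltW|apply: ler0n].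
have step1 : qsc_P lam (fun e => D (c0 + e) == c0) <=
    qsc_P lam (fun e => (if [pick x0 | (wt x0 <= b)%N && ((G *m A') *m x0 == D (c0 + e))] is Some x1
      then x1 else 0) == x).
  rewrite /qsc_P [X in _ <= X]big_mkcond [X in X <= _]big_mkcond /=.
  apply: ler_sum => e _.
  case: ifP => hDe; last by case: ifP => _ //; apply: hw.
  case: pickP => [x1 /andP [hx1 /eqP he]|].
    have -> : x1 = x by apply: uq => //; rewrite he (eqP hDe).
    by rewrite eqxx.
  by move=> /(_ x); rewrite hx (eqP hDe) eqxx.
apply: le_trans step1.
have := hPe c0 hc0.
have tot := @qsc_total R F m lam.
rewrite /qsc_P in tot *.
rewrite (bigID (fun e => D (c0 + e) == c0)) /= in tot.
move=> hb.
rewrite lerBlDr; apply: (le_trans (y := \sum_(e | D (c0 + e) == c0) qsc_prob lam e + \sum_(e | D (c0 + e) != c0) qsc_prob lam e)).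
  by rewrite tot.
by rewrite lerD2l.
Qed.
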